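(* Let $W$ be a normal WPO-dilator. If $X$ is a well partial order, then $\mathcal T W(X)$ (ordered by $\leq_{\mathcal T W(X)}$) is a well partial order.
   Context: A quasi embedding between partial orders $X,Y$ is a function $f$ with $f(x)\leq_Y f(y)\Rightarrow x\leq_X y$; an embedding also satisfies the converse. $\mathrm{PO}$ is the category of partial orders and quasi embeddings. $[X]^{<\omega}$ denotes the finite subsets of $X$, with $[f]^{<\omega}(a)=\{f(x)\mid x\in a\}$; subsets of partial orders are regarded as suborders and $\iota_a$ denotes an inclusion map. A PO-dilator is a functor $W:\mathrm{PO}\to\mathrm{PO}$ mapping embeddings to embeddings, with a natural transformation $\operatorname{supp}^W:W\Rightarrow[\cdot]^{<\omega}$ such that for every embedding $f:X\to Y$, $\operatorname{rng}(W(f))=\{\sigma\in W(Y)\mid\operatorname{supp}^W_Y(\sigma)\subseteq\operatorname{rng}(f)\}$. For finite $a,b\subseteq X$, $a\leq^{\mathrm{fin}}_X b$ iff every $x\in a$ has some $y\in b$ with $x\leq_X y$. $W$ is normal if $\sigma\leq_{W(X)}\tau$ implies $\operatorname{supp}^W_X(\sigma)\leq^{\mathrm{fin}}_X\operatorname{supp}^W_X(\tau)$. A well partial order is a partial order in which every infinite sequence $x_0,x_1,\dots$ has indices $i<j$ with $x_i\leq x_j$. $W$ is a WPO-dilator if $W(X)$ is a well partial order whenever $X$ is. For a normal PO-dilator $W$ and partial order $X$, the set $\mathcal T W(X)$ and relation $\leq_{\mathcal T W(X)}$ are defined by simultaneous recursion. Terms: (i) $\overline x$ for each $x\in X$; (ii)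 for each finite $a\subseteq\mathcal T W(X)$ on which the restriction of $\leq_{\mathcal T W(X)}$ is a partial order, and each $\sigma\in W(a)$ with $\operatorname{supp}^W_a(\sigma)=a$, a term $\circ(a,\sigma)$. Relation: $s\leq_{\mathcal T W(X)}t$ iff (i') $s=\overline x$, $t=\overline y$, $x\leq_X y$; or (ii') $t=\circ(b,\tau)$ and $s\leq_{\mathcal T W(X)}t'$ for some $t'\in b$; or (iii') $s=\circ(a,\sigma)$, $t=\circ(b,\tau)$, the restriction of $\leq_{\mathcal T W(X)}$ to $a\cup b$ is a partial order, and $W(\iota_a)(\sigma)\leq_{W(a\cup b)}W(\iota_b)(\tau)$ for the inclusions $\iota_a:a\hookrightarrow a\cup b$, $\iota_b:b\hookrightarrow a\cup b$. (The recursion is along the length $l(\overline x)=0$, $l(\circ(a,\sigma))=1+\sum_{r\in a}2\,l(r)$.) *)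

(* Defs.v *)
From mathcomp Require Import ssreflect ssrfun ssrbool eqtype ssrnat seq fintype bigop.
From Stdlib Require List.

Set Implicit Arguments.
Unset Strict Implicit.
Unset Printing Implicit Defensive.

Record PO := mkPO {
  carrier :> Type;
  ple : carrier -> carrier -> Prop;
  ple_refl : forall x, ple x x;
  ple_trans : forall x y z, ple x y -> ple y z -> ple x z;
  ple_anti : forall x y, ple x y -> ple y x -> x = y
}.
Arguments ple {p}.

(* quasi embedding: f x <= f y -> x <= y  (morphisms of the category PO) *)
Definition quasi_emb (X Y : PO) (f : X -> Y) : Prop :=
  forall x y : X, ple (f x) (f y) -> ple x y.

Definition embedding (X Y : PO) (f : X -> Y) : Prop :=
  forall x y : X, ple (f x) (f y) <-> ple x y.

(* Finite subsets of X are represented by lists, read as the set of their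
   entries (membership via List.In). *)

Definition fin_le (X : PO) (a b : list X) : Prop :=
  forall x, List.In x a -> exists y, List.In y b /\ ple x y.

Definition wpo (X : PO) : Prop :=
  forall f : nat -> X, exists i j, (i < j)%N /\ ple (f i) (f j).

Record PO_dilator := {
  Wob : PO -> PO;
  Wmap : forall (X Y : PO) (f : X -> Y), quasi_emb f -> Wob X -> Wob Y;
  Wmap_qe : forall (X Y : PO) (f : X -> Y) (Hf : quasi_emb f), quasi_emb (Wmap Hf);
  (* functions are extensional (set-theoretic functions) *)
  Wmap_ext : forall (X Y : PO) (f g : X -> Y) (Hf : quasi_emb f) (Hg : quasi_emb g),
      (forall x, f x = g x) -> forall s, Wmap Hf s = Wmap Hg s;
  Wmap_id : forall (X : PO) (H : quasi_emb (fun x : X => x)) s, Wmap H s = s;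
  Wmap_comp : forall (X Y Z : PO) (f : X -> Y) (g : Y -> Z)
      (Hf : quasi_emb f) (Hg : quasi_emb g) (Hgf : quasi_emb (fun x => g (f x))) s,
      Wmap Hgf s = Wmap Hg (Wmap Hf s);
  Wmap_emb : forall (X Y : PO) (f : X -> Y) (Hf : quasi_emb f),
      embedding f -> embedding (Wmap Hf);
  (* support: a natural transformation W => [.]^{<omega} *)
  supp : forall X : PO, Wob X -> list X;
  supp_nat : forall (X Y : PO) (f : X -> Y) (Hf : quasi_emb f) (s : Wob X) (y : Y),
      List.In y (supp (Wmap Hf s)) <-> exists x, List.In x (supp s) /\ f x = y;
  supp_rng : forall (X Y : PO) (f : X -> Y) (Hf : quasi_emb f), embedding f ->
      forall t : Wob Y,
        (exists s, Wmap Hf s = t) <-> (forall y, List.In y (supp t) -> exists x, f x = y)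
}.

Definition normal (W : PO_dilator) : Prop :=
  forall (X : PO) (s t : Wob W X), ple s t -> fin_le (supp s) (supp t).

Definition WPO_dilator (W : PO_dilator) : Prop :=
  forall X : PO, wpo X -> wpo (Wob W X).

Record is_po (n : nat) (R : 'I_n -> 'I_n -> Prop) : Prop := {
  ispo_refl : forall i, R i i;
  ispo_trans : forall i j l, R i j -> R j l -> R i l;
  ispo_anti : forall i j, R i j -> R j i -> i = j
}.

Definition ordPO (n : nat) (R : 'I_n -> 'I_n -> Prop) (H : is_po R) : PO :=
  @mkPO 'I_n R (ispo_refl H) (ispo_trans H) (ispo_anti H).

Section Terms.
Variables (W : PO_dilator) (X : PO).

(* A term o(a, sigma) is represented by an enumeration
   ts : 'I_k -> raw of the finite set a, a partial order r on 'I_k (which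
   well-formedness forces to be the order induced from a), and
   sigma in W('I_k, r). *)
Inductive raw : Type :=
| Leaf : X -> raw
| Node : forall (k : nat) (r : 'I_k -> 'I_k -> Prop) (Hr : is_po r),
    ('I_k -> raw) -> Wob W (ordPO Hr) -> raw.

(* Equality of terms: identity up to re-enumeration of the finite sets
   (a bijection pi of indices, transported along W(pi)). *)
Fixpoint req (s : raw) : raw -> Prop :=
  match s with
  | Leaf x => fun t => match t with Leaf y => x = y | Node _ _ _ _ _ => False end
  | Node k r Hr ts sg => fun t =>
      match t with
      | Leaf _ => False
      | Node m r' Hr' us tau =>
          exists pi : 'I_k -> 'I_m,
            bijective pi /\
            (forall i, req (ts i) (us (pi i))) /\
            (forall i j, r i j <-> r' (pi i) (pi j)) /\
            exists Hpi : quasi_emb (X := ordPO Hr) (Y := ordPO Hr') pi,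
              Wmap Hpi sg = tau
      end
  end.

Fixpoint size (s : raw) : nat :=
  match s with
  | Leaf _ => 0
  | Node k _ _ ts _ => (\sum_(i < k) 2 * size (ts i)).+1
  end.

(* Clause (iii'): given the relation L (= <=_{TW(X)} on the relevant
   subterms), the union a \cup b is represented (up to isomorphism) by
   'I_n with inclusions ia, ib; the restriction of L to it must be a
   partial order R, and W(ia)(sigma) <= W(ib)(tau) in W(a \cup b). *)
Definition union_le (L : raw -> raw -> Prop)
    (k : nat) (r : 'I_k -> 'I_k -> Prop) (Hr : is_po r) (ts : 'I_k -> raw)
    (sg : Wob W (ordPO Hr))
    (m : nat) (r' : 'I_m -> 'I_m -> Prop) (Hr' : is_po r') (us : 'I_m -> raw)
    (tau : Wob W (ordPO Hr')) : Prop :=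
  exists (n : nat) (R : 'I_n -> 'I_n -> Prop) (HR : is_po R)
         (ia : 'I_k -> 'I_n) (ib : 'I_m -> 'I_n),
    (forall u, (exists i, ia i = u) \/ (exists j, ib j = u)) /\
    injective ia /\ injective ib /\
    (forall i j, ia i = ib j <-> req (ts i) (us j)) /\
    (forall i i', R (ia i) (ia i') <-> L (ts i) (ts i')) /\
    (forall i j, R (ia i) (ib j) <-> L (ts i) (us j)) /\
    (forall i j, R (ib j) (ia i) <-> L (us j) (ts i)) /\
    (forall j j', R (ib j) (ib j') <-> L (us j) (us j')) /\
    exists (Ha : quasi_emb (X := ordPO Hr) (Y := ordPO HR) ia)
           (Hb : quasi_emb (X := ordPO Hr') (Y := ordPO HR) ib),
      ple (Wmap Ha sg) (Wmap Hb tau).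

(* The recursion along the length, implemented with fuel: every recursive
   call is on a pair of strictly smaller total length. *)
Fixpoint lef (fuel : nat) (s t : raw) {struct fuel} : Prop :=
  match fuel with
  | 0 => False
  | fuel'.+1 =>
      match t with
      | Leaf y => match s with Leaf x => ple x y | Node _ _ _ _ _ => False end
      | Node m r' Hr' us tau =>
          (exists j, lef fuel' s (us j)) \/
          match s with
          | Leaf _ => False
          | Node k r Hr ts sg => union_le (lef fuel') ts sg us tau
          end
      end
  end.

Definition TWle (s t : raw) : Prop := lef (size s + size t).+1 s t.

Fixpoint wf (s : raw) : Prop :=
  match s with
  | Leaf _ => True
  | Node k r Hr ts sg =>
      (forall i, wf (ts i)) /\
      (forall i j, req (ts i) (ts j) -> i = j) /\
      (forall i j, r i j <-> TWle (ts i) (ts j)) /\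
      (forall i, List.In i (supp sg))
  end.

(* T W (X), with <=_{TW(X)}, is a well partial order
   (terms are compared up to the term equality req). *)
Definition TW_is_wpo : Prop :=
  (forall s, wf s -> TWle s s) /\
  (forall s t u, wf s -> wf t -> wf u -> TWle s t -> TWle t u -> TWle s u) /\
  (forall s t, wf s -> wf t -> TWle s t -> TWle t s -> req s t) /\
  (forall f : nat -> raw, (forall i, wf (f i)) ->
     exists i j, (i < j)%N /\ TWle (f i) (f j)).

End Terms.

(* Main.v *)
Require Import Defs.
From mathcomp Require Import ssreflect ssrfun ssrbool eqtype ssrnat seq fintype bigop.
From mathcomp Require Import zify.
From Stdlib Require Import Classical ClassicalEpsilon ProofIrrelevance.
From Stdlib Require List.
Set Implicit Arguments.
Unset Strict Implicit.
Unset Printing Implicit Defensive.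


Section P1.
Variables (W : PO_dilator) (X : PO).
Local Notation raw := (raw W X).
Local Notation tsz := (@Defs.size W X).

Lemma sum_ge1 k (F : 'I_k -> nat) i : F i <= \sum_(j < k) F j.
Proof. by rewrite (bigD1 i) //= leq_addr. Qed.

Lemma sum_ge2 k (F : 'I_k -> nat) i i' : i != i' -> F i + F i' <= \sum_(j < k) F j.
Proof.
move=> ne; rewrite (bigD1 i) //= (bigD1 i') /=; last by rewrite eq_sym.
by rewrite addnA leq_addr.
Qed.

Lemma sz_child k r Hr (ts : 'I_k -> raw) sg i : tsz (ts i) < tsz (@Node W X k r Hr ts sg).
Proof.
rewrite /= ltnS; apply: leq_trans _ (sum_ge1 (fun j => 2 * tsz (ts j)) i).
by rewrite leq_pmull.
Qed.

Lemma sz_pair k r Hr (ts : 'I_k -> raw) sg i i' :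
  tsz (ts i) + tsz (ts i') < tsz (@Node W X k r Hr ts sg).
Proof.
rewrite /= ltnS; case: (eqVneq i i') => [->|ne].
  by rewrite addnn -mul2n; apply: (sum_ge1 (fun j => 2 * tsz (ts j)) i').
apply: leq_trans _ (sum_ge2 (fun j => 2 * tsz (ts j)) ne).
by apply: leq_add; rewrite leq_pmull.
Qed.

Lemma union_le_ext (L L' : raw -> raw -> Prop) k r Hr ts sg m r' Hr' us tau :
 (forall i i', L (ts i) (ts i') <-> L' (ts i) (ts i')) ->
 (forall i j, L (ts i) (us j) <-> L' (ts i) (us j)) ->
 (forall i j, L (us j) (ts i) <-> L' (us j) (ts i)) ->
 (forall j j', L (us j) (us j') <-> L' (us j) (us j')) ->
 @union_le W X L k r Hr ts sg m r' Hr' us tau -> @union_le W X L' k r Hr ts sg m r' Hr' us tau.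
Proof.
move=> E1 E2 E3 E4 [n [R [HR [ia [ib [C [Ia [Ib [Q [H1 [H2 [H3 [H4 H5]]]]]]]]]]]]].
exists n, R, HR, ia, ib; do 4 (split; first done).
split; first by move=> i i'; rewrite H1 E1.
split; first by move=> i i'; rewrite H2 E2.
split; first by move=> i i'; rewrite H3 E3.
split; first by move=> i i'; rewrite H4 E4.
done.
Qed.

Lemma lef_mono n : forall n' s t, tsz s + tsz t < n -> n <= n' -> (lef n s t <-> lef n' s t).
Proof.
elim: n => [|n IH] n' s t // Hsz Hn.
case: n' Hn => [|n'] // Hn.
rewrite ltnS in Hsz; rewrite ltnS in Hn.
case: t Hsz => [y|m r' Hr' us tau] Hsz; first by reflexivity.
have E : forall j, lef n s (us j) <-> lef n' s (us j).
  move=> j; apply: IH => //; apply: leq_trans _ Hsz; rewrite ltn_add2l; exact: sz_child.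
case: s Hsz E => [x|k r Hr ts sg] Hsz E /=.
  by split => [[[j Hj]|[]]|[[j Hj]|[]]]; left; exists j; apply/E.
have Es : forall a b, tsz a + tsz b < tsz (Node ts sg) + tsz (Node us tau) ->
    (lef n a b <-> lef n' a b).
  move=> a b Hab; apply: IH => //; exact: leq_trans Hab Hsz.
have A1 : forall i i', lef n (ts i) (ts i') <-> lef n' (ts i) (ts i').
  move=> i i'; apply: Es; apply: (leq_trans (sz_pair ts sg i i')); exact: leq_addr.
have A2 : forall i j, lef n (ts i) (us j) <-> lef n' (ts i) (us j).
  move=> i j; apply: Es; apply: leq_trans (leq_add (sz_child ts sg i) (ltnW (sz_child us tau j))) _.
  by rewrite addSn.
have A3 : forall i j, lef n (us j) (ts i) <-> lef n' (us j) (ts i).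
  move=> i j; apply: Es; rewrite addnC.
  apply: leq_trans (leq_add (sz_child ts sg i) (ltnW (sz_child us tau j))) _.
  by rewrite addSn.
have A4 : forall j j', lef n (us j) (us j') <-> lef n' (us j) (us j').
  move=> i i'; apply: Es; apply: (leq_trans (sz_pair us tau i i')); exact: leq_addl.
split => [[[j Hj]|Hu]|[[j Hj]|Hu]].
- by left; exists j; apply/E.
- right; apply: union_le_ext Hu => *; by [apply: A1|apply: A2|apply: A3|apply: A4].
- by left; exists j; apply/E.
- right; apply: union_le_ext Hu => *; symmetry; by [apply: A1|apply: A2|apply: A3|apply: A4].
Qed.

End P1.

Section WH.
Variable W : PO_dilator.

Lemma Wmap_compE (A B C : PO) (f : A -> B) (g : B -> C) (h : A -> C)
  (Hf : quasi_emb f) (Hg : quasi_emb g) (Hh : quasi_emb h) :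
  (forall x, g (f x) = h x) -> forall s : Wob W A, Wmap Hg (Wmap Hf s) = Wmap Hh s.
Proof.
move=> E s.
have Hgf : quasi_emb (X:=A) (Y:=C) (fun x => g (f x)).
  by move=> x y; rewrite !E; apply: Hh.
by rewrite -(Wmap_comp Hf Hg Hgf); apply: Wmap_ext.
Qed.

Lemma Wmap_idE (A : PO) (h : A -> A) (Hh : quasi_emb h) :
  (forall x, h x = x) -> forall s : Wob W A, Wmap Hh s = s.
Proof.
move=> E s.
have Hi : quasi_emb (X:=A) (Y:=A) (fun x => x) by move=> x y.
by rewrite (Wmap_ext Hh Hi E) Wmap_id.
Qed.

Lemma Wmap_extE (A B : PO) (f g : A -> B) (Hf : quasi_emb f) (Hg : quasi_emb g) :
  (forall x, f x = g x) -> forall s : Wob W A, Wmap Hf s = Wmap Hg s.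
Proof. by move=> E s; apply: Wmap_ext. Qed.

Lemma emb_inj (A B : PO) (f : A -> B) : embedding f -> injective f.
Proof.
move=> E x y H; apply: ple_anti; apply/E; rewrite H; exact: ple_refl.
Qed.

Lemma Wmap_inj (A B : PO) (f : A -> B) (Hf : quasi_emb f) :
  embedding f -> injective (Wmap (p:=W) Hf).
Proof. by move=> E; apply: emb_inj; apply: Wmap_emb. Qed.

End WH.

Section P2.
Variables (W : PO_dilator) (X : PO).
Local Notation raw := (raw W X).
Local Notation tsz := (@Defs.size W X).
Local Notation TWle := (@TWle W X).
Local Notation req := (@req W X).

Lemma TWle_lef n s t : tsz s + tsz t < n -> (lef n s t <-> TWle s t).
Proof. by move=> H; symmetry; apply: lef_mono. Qed.

Lemma TWle_leaf (x y : X) : TWle (Leaf W x) (Leaf W y) <-> ple x y.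
Proof. by []. Qed.

Lemma TWle_node_leaf k r Hr (ts : 'I_k -> raw) sg y : ~ TWle (@Node W X k r Hr ts sg) (Leaf W y).
Proof. by []. Qed.

Lemma TWle_node s m r' Hr' (us : 'I_m -> raw) tau :
  TWle s (@Node W X m r' Hr' us tau) <->
  (exists j, TWle s (us j)) \/
  match s with Leaf _ => False | Node k r Hr ts sg => union_le TWle ts sg us tau end.
Proof.
set N := tsz s + tsz (Node us tau).
have -> : TWle s (Node us tau) = lef N.+1 s (Node us tau) by [].
rewrite [lef N.+1 _ _]/=.
have E : forall j, lef N s (us j) <-> TWle s (us j).
  move=> j; apply: TWle_lef; rewrite /N ltn_add2l; exact: sz_child.
case: s @N E => [x|k r Hr ts sg] N E.
  by split => [[[j Hj]|[]]|[[j Hj]|[]]]; left; exists j; apply/E.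
have Es : forall a b, tsz a + tsz b < N -> (lef N a b <-> TWle a b).
  by move=> a b Hab; apply: TWle_lef.
have A1 : forall i i', lef N (ts i) (ts i') <-> TWle (ts i) (ts i').
  move=> i i'; apply: Es; apply: (leq_trans (sz_pair ts sg i i')); exact: leq_addr.
have A2 : forall i j, lef N (ts i) (us j) <-> TWle (ts i) (us j).
  move=> i j; apply: Es; apply: leq_trans (leq_add (sz_child ts sg i) (ltnW (sz_child us tau j))) _.
  by rewrite addSn.
have A3 : forall i j, lef N (us j) (ts i) <-> TWle (us j) (ts i).
  move=> i j; apply: Es; rewrite addnC.
  apply: leq_trans (leq_add (sz_child ts sg i) (ltnW (sz_child us tau j))) _.
  by rewrite addSn.
have A4 : forall j j', lef N (us j) (us j') <-> TWle (us j) (us j').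
  move=> i i'; apply: Es; apply: (leq_trans (sz_pair us tau i i')); exact: leq_addl.
split => [[[j Hj]|Hu]|[[j Hj]|Hu]].
- by left; exists j; apply/E.
- right; apply: union_le_ext Hu => *; by [apply: A1|apply: A2|apply: A3|apply: A4].
- by left; exists j; apply/E.
- right; apply: union_le_ext Hu => *; symmetry; by [apply: A1|apply: A2|apply: A3|apply: A4].
Qed.

Lemma TWle_child s m r' Hr' (us : 'I_m -> raw) tau j :
  TWle s (us j) -> TWle s (@Node W X m r' Hr' us tau).
Proof. by move=> H; apply/TWle_node; left; exists j. Qed.

Lemma TWle_union k r Hr (ts : 'I_k -> raw) sg m r' Hr' (us : 'I_m -> raw) tau :
  union_le TWle ts sg us tau -> TWle (@Node W X k r Hr ts sg) (@Node W X m r' Hr' us tau).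
Proof. by move=> H; apply/TWle_node; right. Qed.

Lemma req_refl s : req s s.
Proof.
elim/raw_ind: s => [x|k r Hr ts IH sg] //=.
exists (fun i => i); split; first by exists (fun i => i).
split; first by [].
split; first by [].
have H : quasi_emb (X:=ordPO Hr) (Y:=ordPO Hr) (fun i => i) by move=> x y.
by exists H; apply: Wmap_id.
Qed.

Lemma req_sym s t : req s t -> req t s.
Proof.
elim/raw_ind: s t => [x|k r Hr ts IH sg] [y|m r' Hr' us tau] //=.
move=> [pi [[g g1 g2] [Hc [Hrr [Hpi E]]]]].
exists g; split; first by exists pi.
split.
  move=> u; apply: IH; have := Hc (g u); by rewrite g2.
have Hg' : forall u v, r' u v <-> r (g u) (g v).
  by move=> u v; have := Hrr (g u) (g v); rewrite !g2; move=> H; symmetry.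
split; first exact: Hg'.
have Hg : quasi_emb (X:=ordPO Hr') (Y:=ordPO Hr) g by move=> u v /Hg'.
exists Hg; rewrite -E; rewrite (Wmap_compE (h := fun x => x) _ _ (fun x y (H : ple x y) => H)) //.
  exact: Wmap_id.
Qed.

Lemma req_trans s t u : req s t -> req t u -> req s u.
Proof.
elim/raw_ind: s t u => [x|k r Hr ts IH sg] [y|m r' Hr' us tau] [z|p r'' Hr'' vs rho] //=;
  try by move=> -> ->.
move=> [pi [[g g1 g2] [Hc [Hrr [Hpi E]]]]] [pi' [[g' g1' g2'] [Hc' [Hrr' [Hpi' E']]]]].
exists (fun i => pi' (pi i)); split.
  by exists (fun i => g (g' i)) => i /=; rewrite ?g1 ?g1' ?g2' ?g2.
split; first by move=> i; apply: IH (Hc i) (Hc' _).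
split; first by move=> i j; rewrite Hrr Hrr'.
have H : quasi_emb (X:=ordPO Hr) (Y:=ordPO Hr'') (fun i => pi' (pi i)).
  by move=> a b /Hrr' /Hrr.
exists H; rewrite -E' -E; symmetry; exact: Wmap_compE.
Qed.

End P2.

Section P3.
Variables (W : PO_dilator) (X : PO).
Local Notation raw := (raw W X).
Local Notation tsz := (@Defs.size W X).
Local Notation TWle := (@TWle W X).
Local Notation req := (@req W X).

Lemma req_size s t : req s t -> tsz s = tsz t.
Proof.
elim/raw_ind: s t => [x|k r Hr ts IH sg] [y|m r' Hr' us tau] //= [pi [Hb [Hc _]]].
congr (_.+1); rewrite [RHS](reindex pi) /=; last exact: onW_bij.
by apply: eq_bigr => i _; rewrite (IH i _ (Hc i)).
Qed.

Lemma req_leafE (x : X) t : req (Leaf W x) t -> t = Leaf W x.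
Proof. by case: t => [y|] //= ->. Qed.

Lemma TWle_req_imp N : forall s t s' t', tsz s + tsz t < N -> req s s' -> req t t' ->
  TWle s t -> TWle s' t'.
Proof.
elim: N => [|N IH] // s t s' t' Hsz Hs Ht.
rewrite ltnS in Hsz.
have IHi : forall a b a' b', tsz a + tsz b < N -> req a a' -> req b b' ->
    (TWle a b <-> TWle a' b').
  move=> a b a' b' H Ha Hb; split; first exact: IH.
  apply: IH; [by rewrite -(req_size Ha) -(req_size Hb)|exact: req_sym|exact: req_sym].
case: t Hsz Ht => [y|m r' Hr' us tau] Hsz Ht.
  rewrite (req_leafE Ht); case: s Hsz Hs => [x|k r Hr ts sg] Hsz Hs //.
  by rewrite (req_leafE Hs).
case: t' Ht => [y'|m' r'2 Hr'2 us' tau'] //= [pi [[g g1 g2] [Hc [Hrr [Hpi E]]]]].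
move/TWle_node => [[j Hj]|Hu].
  apply/TWle_node; left; exists (pi j); apply: (IH s (us j)) => //.
  apply: leq_trans Hsz; rewrite ltn_add2l; exact: sz_child.
case: s Hsz Hs Hu => [x|k r Hr ts sg] Hsz Hs // Hu.
case: s' Hs => [x'|k' r2 Hr2 ts' sg'] //= [rho [[h h1 h2] [Hc2 [Hrr2 [Hrho E2]]]]].
apply: TWle_union.
move: Hu => [n [R [HR [ia [ib [C [Ia [Ib [Q [H1 [H2 [H3 [H4 [Ha [Hb Hle]]]]]]]]]]]]]]].
have Rts : forall i, req (ts (h i)) (ts' i) by move=> i; have := Hc2 (h i); rewrite h2.
have Rus : forall j, req (us (g j)) (us' j) by move=> j; have := Hc (g j); rewrite g2.
have Sz1 : forall i i', tsz (ts i) + tsz (ts i') < N.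
  move=> i i'; apply: leq_trans Hsz; apply: (leq_trans (sz_pair ts sg i i')); exact: leq_addr.
have Sz2 : forall i j, tsz (ts i) + tsz (us j) < N.
  move=> i j; apply: leq_trans Hsz.
  apply: leq_trans (leq_add (sz_child ts sg i) (ltnW (sz_child us tau j))) _.
  by rewrite addSn.
have Sz3 : forall i j, tsz (us j) + tsz (ts i) < N by move=> i j; rewrite addnC.
have Sz4 : forall j j', tsz (us j) + tsz (us j') < N.
  move=> i i'; apply: leq_trans Hsz; apply: (leq_trans (sz_pair us tau i i')); exact: leq_addl.
exists n, R, HR, (fun i => ia (h i)), (fun j => ib (g j)).
split.
  move=> u; case: (C u) => [[i <-]|[j <-]]; [left; exists (rho i)|right; exists (pi j)];
  by rewrite ?h1 ?g1.
split; first by move=> a b /Ia /(can_inj h2).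
split; first by move=> a b /Ib /(can_inj g2).
split.
  move=> i j; rewrite Q; split => H.
    apply: req_trans (req_sym (Rts i)) _; exact: req_trans H (Rus j).
  apply: req_trans (Rts i) _; exact: req_trans H (req_sym (Rus j)).
split; first by move=> i i'; rewrite H1; apply: IHi.
split; first by move=> i j; rewrite H2; apply: IHi.
split; first by move=> i j; rewrite H3; apply: IHi.
split; first by move=> i i'; rewrite H4; apply: IHi.
have Ha' : quasi_emb (X:=ordPO Hr2) (Y:=ordPO HR) (fun i => ia (h i)).
  move=> a b /Ha /= H; have := proj1 (Hrr2 (h a) (h b)) H; by rewrite !h2.
have Hb' : quasi_emb (X:=ordPO Hr'2) (Y:=ordPO HR) (fun j => ib (g j)).
  move=> a b /Hb /= H; have := proj1 (Hrr (g a) (g b)) H; by rewrite !g2.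
exists Ha', Hb'.
rewrite -E2 -E (Wmap_compE Hrho Ha' Ha); last by move=> x; rewrite h1.
by rewrite (Wmap_compE Hpi Hb' Hb) //; move=> x; rewrite g1.
Qed.

Lemma TWle_reqE s t s' t' : req s s' -> req t t' -> (TWle s t <-> TWle s' t').
Proof.
move=> Hs Ht; split; first exact: (@TWle_req_imp (tsz s + tsz t).+1).
apply: (@TWle_req_imp (tsz s' + tsz t').+1) => //; exact: req_sym.
Qed.

Lemma wf_child k r Hr (ts : 'I_k -> raw) sg i : wf (@Node W X k r Hr ts sg) -> wf (ts i).
Proof. by case=> H _; apply: H. Qed.

Lemma TWle_refl s : wf s -> TWle s s.
Proof.
case: s => [x|k r Hr ts sg] /=; first by move=> _; apply: ple_refl.
move=> [Hw [Hd [Hrr Hsp]]].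
apply: TWle_union.
exists k, r, Hr, (fun i => i), (fun i => i).
split; first by move=> u; left; exists u.
do 2 (split; first by move=> a b).
split; first by move=> i j; split => [->|/Hd //]; apply: req_refl.
do 4 (split; first by move=> i j; apply: Hrr).
have H : quasi_emb (X:=ordPO Hr) (Y:=ordPO Hr) (fun i => i) by move=> a b.
by exists H, H; apply: ple_refl.
Qed.

Lemma TWle_child_refl k r Hr (ts : 'I_k -> raw) sg i :
  wf (@Node W X k r Hr ts sg) -> TWle (ts i) (Node ts sg).
Proof. by move=> Hw; apply: (TWle_child sg (j:=i)); apply: TWle_refl; apply: wf_child Hw. Qed.

End P3.

Lemma quot (T : Type) (E : T -> T -> Prop) (Er : forall a, E a a)
  (Es : forall a b, E a b -> E b a) (Et : forall a b c, E a b -> E b c -> E a c)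
  N (f : 'I_N -> T) : exists n (q : 'I_N -> 'I_n),
  (forall u, exists x, q x = u) /\ (forall x y, q x = q y <-> E (f x) (f y)).
Proof.
elim: N f => [|N IH] f.
  by exists 0, id; split; [move=> u; exists u|case].
have [n [q [Sq Eq]]] := IH (fun j => f (lift ord_max j)).
case: (classic (exists j, E (f ord_max) (f (lift ord_max j)))) => [[j0 Hj0]|Hn].
- exists n, (fun x => match unlift ord_max x with Some j => q j | None => q j0 end); split.
    by move=> u; have [x Hx] := Sq u; exists (lift ord_max x); rewrite liftK.
  move=> x y; case: (unliftP ord_max x) => [j ->|->]; case: (unliftP ord_max y) => [j' ->|->].
  + exact: Eq.
  + rewrite Eq; split => H; [exact: Et H (Es _ _ Hj0) | exact: Et H Hj0].
  + rewrite Eq; split => H; [exact: Et Hj0 H | exact: Et (Es _ _ Hj0) H].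
  + by split => _; [exact: Er|].
- exists n.+1, (fun x => match unlift ord_max x with Some j => lift ord_max (q j) | None => ord_max end); split.
    move=> u; case: (unliftP ord_max u) => [v ->|->].
      by have [x Hx] := Sq v; exists (lift ord_max x); rewrite liftK Hx.
    by exists ord_max; rewrite unlift_none.
  move=> x y; case: (unliftP ord_max x) => [j ->|->]; case: (unliftP ord_max y) => [j' ->|->].
  + by split => [/lift_inj/Eq //| /Eq ->].
  + split => [H|H]; first by move: (neq_lift ord_max (q j)); rewrite H eqxx.
    by exfalso; apply: Hn; exists j; exact: Es _ _ H.
  + split => [H|H]; first by move: (neq_lift ord_max (q j')); rewrite -H eqxx.
    by exfalso; apply: Hn; exists j'.
  + by split => _; [exact: Er|].
Qed.

Lemma quot_po (T : Type) (E L : T -> T -> Prop) (Er : forall a, E a a)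
  (Es : forall a b, E a b -> E b a) (Et : forall a b c, E a b -> E b c -> E a c)
  N (f : 'I_N -> T)
  (Lr : forall x, L (f x) (f x))
  (Lt : forall x y z, L (f x) (f y) -> L (f y) (f z) -> L (f x) (f z))
  (La : forall x y, L (f x) (f y) -> L (f y) (f x) -> E (f x) (f y))
  (Lrs : forall x x' y y', E (f x) (f x') -> E (f y) (f y') -> L (f x) (f y) -> L (f x') (f y')) :
  exists n (q : 'I_N -> 'I_n) (R : 'I_n -> 'I_n -> Prop) (HR : is_po R),
  (forall u, exists x, q x = u) /\ (forall x y, q x = q y <-> E (f x) (f y)) /\
  (forall x y, R (q x) (q y) <-> L (f x) (f y)).
Proof.
have [n [q [Sq Eq]]] := quot Er Es Et f.
pose R u v := exists x y, q x = u /\ q y = v /\ L (f x) (f y).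
have RE : forall x y, R (q x) (q y) <-> L (f x) (f y).
  move=> x y; split; last by move=> H; exists x, y.
  by move=> [x' [y' [Hx [Hy H]]]]; apply: Lrs H; apply/Eq.
have HR : is_po R.
  split.
  - by move=> u; have [x <-] := Sq u; apply/RE; exact: Lr.
  - move=> u v w; have [x <-] := Sq u; have [y <-] := Sq v; have [z <-] := Sq w.
    by move=> /RE H1 /RE H2; apply/RE; exact: Lt H1 H2.
  - move=> u v; have [x <-] := Sq u; have [y <-] := Sq v.
    by move=> /RE H1 /RE H2; apply/Eq; exact: La.
by exists n, q, R, HR.
Qed.

Section P4.
Variables (W : PO_dilator) (X : PO).
Local Notation raw := (raw W X).
Local Notation tsz := (@Defs.size W X).
Local Notation TWle := (@TWle W X).
Local Notation req := (@req W X).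

Definition urep (L : raw -> raw -> Prop) k (ts : 'I_k -> raw) m (us : 'I_m -> raw)
  n (R : 'I_n -> 'I_n -> Prop) (ia : 'I_k -> 'I_n) (ib : 'I_m -> 'I_n) : Prop :=
  (forall u, (exists i, ia i = u) \/ (exists j, ib j = u)) /\
  injective ia /\ injective ib /\
  (forall i j, ia i = ib j <-> req (ts i) (us j)) /\
  (forall i i', R (ia i) (ia i') <-> L (ts i) (ts i')) /\
  (forall i j, R (ia i) (ib j) <-> L (ts i) (us j)) /\
  (forall i j, R (ib j) (ia i) <-> L (us j) (ts i)) /\
  (forall j j', R (ib j) (ib j') <-> L (us j) (us j')).

Lemma union_leP (L : raw -> raw -> Prop) k r (Hr : is_po r) (ts : 'I_k -> raw) sg
  m r' (Hr' : is_po r') (us : 'I_m -> raw) tau :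
  union_le L ts sg us tau <->
  exists n (R : 'I_n -> 'I_n -> Prop) (HR : is_po R) ia ib, urep L ts us R ia ib /\
    exists (Ha : quasi_emb (X:=ordPO Hr) (Y:=ordPO HR) ia)
           (Hb : quasi_emb (X:=ordPO Hr') (Y:=ordPO HR) ib),
      ple (Wmap Ha sg) (Wmap Hb tau).
Proof.
split.
  move=> [n [R [HR [ia [ib [C [Ia [Ib [Q [H1 [H2 [H3 [H4 H5]]]]]]]]]]]]].
  by exists n, R, HR, ia, ib; split.
move=> [n [R [HR [ia [ib [[C [Ia [Ib [Q [H1 [H2 [H3 H4]]]]]]] H5]]]]]].
by exists n, R, HR, ia, ib.
Qed.

Definition yrep k (ts : 'I_k -> raw) m (us : 'I_m -> raw) (Y : PO) (ja : 'I_k -> Y) (jb : 'I_m -> Y) : Prop :=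
  (forall i j, req (ts i) (us j) -> ja i = jb j) /\
  (forall i i', ple (ja i) (ja i') <-> TWle (ts i) (ts i')) /\
  (forall i j, ple (ja i) (jb j) <-> TWle (ts i) (us j)) /\
  (forall i j, ple (jb j) (ja i) <-> TWle (us j) (ts i)) /\
  (forall j j', ple (jb j) (jb j') <-> TWle (us j) (us j')).

Lemma yrep_sym k (ts : 'I_k -> raw) m (us : 'I_m -> raw) (Y : PO) (ja : 'I_k -> Y) (jb : 'I_m -> Y) :
  yrep ts us ja jb -> yrep us ts jb ja.
Proof.
move=> [Q [H1 [H2 [H3 H4]]]]; split; last by [].
move=> j i H; symmetry; apply: Q; exact: req_sym.
Qed.

Lemma urep_yrep k (ts : 'I_k -> raw) m (us : 'I_m -> raw) n (R : 'I_n -> 'I_n -> Prop) (HR : is_po R) (ia : 'I_k -> 'I_n) (ib : 'I_m -> 'I_n) :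
  urep TWle ts us R ia ib -> yrep (Y:=ordPO HR) ts us ia ib.
Proof.
move=> [C [Ia [Ib [Q [H1 [H2 [H3 H4]]]]]]]; split; last by [].
by move=> i j /Q.
Qed.

Lemma transport k r (Hr : is_po r) (ts : 'I_k -> raw) (sg : Wob W (ordPO Hr)) m r' (Hr' : is_po r')
  (us : 'I_m -> raw) (tau : Wob W (ordPO Hr')) n (R : 'I_n -> 'I_n -> Prop) (HR : is_po R) (ia : 'I_k -> 'I_n) (ib : 'I_m -> 'I_n) (Y : PO) (ja : 'I_k -> Y) (jb : 'I_m -> Y) :
  urep TWle ts us R ia ib -> yrep ts us ja jb ->
  forall (Ha : quasi_emb (X:=ordPO Hr) (Y:=ordPO HR) ia)
         (Hb : quasi_emb (X:=ordPO Hr') (Y:=ordPO HR) ib)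
         (Hja : quasi_emb (X:=ordPO Hr) (Y:=Y) ja)
         (Hjb : quasi_emb (X:=ordPO Hr') (Y:=Y) jb),
  ple (Wmap Ha sg) (Wmap Hb tau) <-> ple (Wmap Hja sg) (Wmap Hjb tau).
Proof.
move=> [C [Ia [Ib [Q [H1 [H2 [H3 H4]]]]]]] [Qj [J1 [J2 [J3 J4]]]] Ha Hb Hja Hjb.
have Ex : forall u : 'I_n, exists y : Y,
    (forall i, ia i = u -> y = ja i) /\ (forall j, ib j = u -> y = jb j).
  move=> u; case: (C u) => [[i <-]|[j <-]].
  - exists (ja i); split; first by move=> i' /Ia ->.
    by move=> j E; apply: Qj; apply/Q.
  - exists (jb j); split; last by move=> j' /Ib ->.
    by move=> i E; symmetry; apply: Qj; apply/Q.
pose h u := proj1_sig (constructive_indefinite_description _ (Ex u)).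
have hP : forall u, (forall i, ia i = u -> h u = ja i) /\ (forall j, ib j = u -> h u = jb j).
  move=> u; exact: (proj2_sig (constructive_indefinite_description _ (Ex u))).
have ha : forall i, h (ia i) = ja i by move=> i; apply: (proj1 (hP _)).
have hb : forall j, h (ib j) = jb j by move=> j; apply: (proj2 (hP _)).
have Hemb : embedding (X:=ordPO HR) (Y:=Y) h.
  move=> u v; case: (C u) => [[i <-]|[j <-]]; case: (C v) => [[i' <-]|[j' <-]];
    rewrite ?ha ?hb.
  - by split => [/J1/H1|/H1/J1].
  - by split => [/J2/H2|/H2/J2].
  - by split => [/J3/H3|/H3/J3].
  - by split => [/J4/H4|/H4/J4].
have Hq : quasi_emb (X:=ordPO HR) (Y:=Y) h by move=> u v /Hemb.
rewrite -(Wmap_emb Hq Hemb (Wmap Ha sg) (Wmap Hb tau)).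
by rewrite (Wmap_compE Ha Hq Hja ha) (Wmap_compE Hb Hq Hjb hb).
Qed.

Fixpoint desc (v t : raw) : Prop :=
  match t with
  | Leaf _ => False
  | Node _ _ _ ts _ => exists i, v = ts i \/ desc v (ts i)
  end.

Lemma desc_child v t : desc v t -> forall m r Hr (vs : 'I_m -> raw) d l,
  v = @Node W X m r Hr vs d -> desc (vs l) t.
Proof.
elim/raw_ind: t => [x|k r Hr ts IH sg] //= [i [->|H]] m r' Hr' vs d l E.
  by exists i; right; rewrite E /=; exists l; left.
by exists i; right; exact: IH H _ _ _ _ _ _ E.
Qed.

Hypothesis HN : normal W.

Lemma nosub N : forall v, tsz v < N -> forall t, wf t -> desc v t -> ~ TWle t v.
Proof.
elim: N => [|N IH] // v Hv t Wt Dt Hle.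
case: v Hv Dt Hle => [y|m r' Hr' vs d] Hv Dt Hle.
  by case: t Wt Dt Hle.
have Szl : forall l, tsz (vs l) < N.
  by move=> l; apply: leq_trans (sz_child vs d l) _; rewrite -ltnS.
move/TWle_node: Hle => [[l Hl]|Hu].
  by apply: (IH (vs l) (Szl l) t Wt _ Hl); apply: desc_child Dt _ _ _ _ _ _ (erefl _).
case: t Wt Dt Hu => [x|k r Hr ts sg] // Wt [i Hi] Hu.
move/union_leP: Hu => [n [R [HR [ia [ib [[C [Ia [Ib [Q [H1 [H2 [H3 H4]]]]]]] [Ha [Hb Hle]]]]]]]].
have [y [Hy Hiy]] : exists y, List.In y (supp (Wmap Hb d)) /\ @ple (ordPO HR) (ia i) y.
  apply: (HN Hle); apply/supp_nat; exists i; split => //.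
  by case: Wt => _ [_ [_ Hs]]; apply: Hs.
move/supp_nat: Hy => [l [_ El]]; subst y.
have Hc : TWle (ts i) (vs l) by apply/H2.
apply: (IH (vs l) (Szl l) (ts i) (wf_child _ Wt) _ Hc).
case: Hi => [Hi|Hi].
  by rewrite -Hi /=; exists l; left.
exact: desc_child Hi _ _ _ _ _ _ (erefl _).
Qed.

Lemma nosub_child k r Hr (ts : 'I_k -> raw) sg i :
  wf (@Node W X k r Hr ts sg) -> ~ TWle (Node ts sg) (ts i).
Proof.
move=> Wt; apply: (@nosub (tsz (ts i)).+1 (ts i) (ltnSn _)) => //.
by exists i; left.
Qed.

End P4.

Section P5.
Variables (W : PO_dilator) (X : PO).
Local Notation raw := (raw W X).
Local Notation tsz := (@Defs.size W X).
Local Notation TWle := (@TWle W X).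
Local Notation req := (@req W X).

Lemma split_l k m (i : 'I_k) : split (lshift m i) = inl i.
Proof. exact: (unsplitK (inl i)). Qed.
Lemma split_r k m (j : 'I_m) : split (rshift k j) = inr j.
Proof. exact: (unsplitK (inr j)). Qed.

Section Quot.
Variable S : raw -> Prop.
Hypothesis Sr : forall a, S a -> TWle a a.
Hypothesis St : forall a b c, S a -> S b -> S c -> TWle a b -> TWle b c -> TWle a c.
Hypothesis Sa : forall a b, S a -> S b -> TWle a b -> TWle b a -> req a b.

Lemma quot_raw N (f : 'I_N -> raw) : (forall x, S (f x)) ->
  exists n (q : 'I_N -> 'I_n) (R : 'I_n -> 'I_n -> Prop) (HR : is_po R),
  (forall u, exists x, q x = u) /\ (forall x y, q x = q y <-> req (f x) (f y)) /\
  (forall x y, R (q x) (q y) <-> TWle (f x) (f y)).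
Proof.
move=> Sf; apply: (@quot_po raw req TWle (@req_refl W X) (@req_sym W X) (@req_trans W X)).
- by move=> x; apply: Sr.
- by move=> x y z; apply: St.
- by move=> x y; apply: Sa.
- by move=> x x' y y' Hx Hy /(TWle_reqE Hx Hy).
Qed.

Lemma union_make k (ts : 'I_k -> raw) m (us : 'I_m -> raw) :
  (forall i, S (ts i)) -> (forall j, S (us j)) ->
  (forall i i', req (ts i) (ts i') -> i = i') -> (forall j j', req (us j) (us j') -> j = j') ->
  exists n (R : 'I_n -> 'I_n -> Prop) (HR : is_po R) ia ib, urep TWle ts us R ia ib.
Proof.
move=> S1 S2 D1 D2.
pose f x := match split x with inl i => ts i | inr j => us j end.
have Sf : forall x, S (f x) by move=> x; rewrite /f; case: (split x).
have [n [q [R [HR [Sq [Eq RE]]]]]] := quot_raw Sf.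
have fl : forall i, f (lshift m i) = ts i by move=> i; rewrite /f split_l.
have fr : forall j, f (rshift k j) = us j by move=> j; rewrite /f split_r.
exists n, R, HR, (fun i => q (lshift m i)), (fun j => q (rshift k j)).
split.
  move=> u; have [x <-] := Sq u; rewrite -(splitK x).
  by case: (split x) => [i|j] /=; [left; exists i|right; exists j].
split; first by move=> i i' /Eq; rewrite !fl => /D1.
split; first by move=> j j' /Eq; rewrite !fr => /D2.
split; first by move=> i j; rewrite Eq fl fr.
split; first by move=> i j; rewrite RE !fl.
split; first by move=> i j; rewrite RE fl fr.
split; first by move=> i j; rewrite RE fl fr.
by move=> i j; rewrite RE !fr.
Qed.

Lemma triple_make k (ts : 'I_k -> raw) m (us : 'I_m -> raw) p (vs : 'I_p -> raw) :
  (forall i, S (ts i)) -> (forall j, S (us j)) -> (forall l, S (vs l)) ->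
  exists n (R : 'I_n -> 'I_n -> Prop) (HR : is_po R) ja jb jc,
    yrep (Y:=ordPO HR) ts us ja jb /\ yrep (Y:=ordPO HR) us vs jb jc /\
    yrep (Y:=ordPO HR) ts vs ja jc.
Proof.
move=> S1 S2 S3.
pose f (x : 'I_(k + (m + p))) := match split x with inl i => ts i
   | inr y => match split y with inl j => us j | inr l => vs l end end.
have Sf : forall x, S (f x) by move=> x; rewrite /f; case: (split x) => // y; case: (split y).
have [n [q [R [HR [Sq [Eq RE]]]]]] := quot_raw Sf.
have f1 : forall i, f (lshift (m + p) i) = ts i by move=> i; rewrite /f split_l.
have f2 : forall j, f (rshift k (lshift p j)) = us j by move=> j; rewrite /f split_r split_l.
have f3 : forall l, f (rshift k (rshift m l)) = vs l by move=> j; rewrite /f !split_r.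
exists n, R, HR, (fun i => q (lshift (m + p) i)), (fun j => q (rshift k (lshift p j))),
  (fun l => q (rshift k (rshift m l))).
split; last split.
- split; first by move=> i j H; apply/Eq; rewrite f1 f2.
  do 3 (split; first by move=> *; rewrite /= RE ?f1 ?f2 ?f3).
  by move=> *; rewrite /= RE ?f1 ?f2 ?f3.
- split; first by move=> i j H; apply/Eq; rewrite f2 f3.
  do 3 (split; first by move=> *; rewrite /= RE ?f1 ?f2 ?f3).
  by move=> *; rewrite /= RE ?f1 ?f2 ?f3.
- split; first by move=> i j H; apply/Eq; rewrite f1 f3.
  do 3 (split; first by move=> *; rewrite /= RE ?f1 ?f2 ?f3).
  by move=> *; rewrite /= RE ?f1 ?f2 ?f3.
Qed.

End Quot.

Lemma yrep_qa k r (Hr : is_po r) (ts : 'I_k -> raw) m (us : 'I_m -> raw) (Y : PO) ja jb :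
  @yrep W X k ts m us Y ja jb -> (forall i i', r i i' <-> TWle (ts i) (ts i')) ->
  quasi_emb (X:=ordPO Hr) (Y:=Y) ja.
Proof. by move=> [_ [H1 _]] E i i' /H1 /E. Qed.

Lemma yrep_qb m r (Hr : is_po r) k (ts : 'I_k -> raw) (us : 'I_m -> raw) (Y : PO) ja jb :
  @yrep W X k ts m us Y ja jb -> (forall j j', r j j' <-> TWle (us j) (us j')) ->
  quasi_emb (X:=ordPO Hr) (Y:=Y) jb.
Proof. by move=> [_ [_ [_ [_ H4]]]] E i i' /H4 /E. Qed.

Hypothesis HN : normal W.

Lemma union_child k r Hr (ts : 'I_k -> raw) sg m r' Hr' (us : 'I_m -> raw) tau :
  wf (@Node W X k r Hr ts sg) -> union_le TWle ts sg (Hr':=Hr') (r':=r') us tau ->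
  forall i, exists j, TWle (ts i) (us j).
Proof.
move=> Wt /union_leP [n [R [HR [ia [ib [[C [Ia [Ib [Q [H1 [H2 [H3 H4]]]]]]] [Ha [Hb Hle]]]]]]]] i.
have [y [Hy Hiy]] : exists y, List.In y (supp (Wmap Hb tau)) /\ @ple (ordPO HR) (ia i) y.
  apply: (HN Hle); apply/supp_nat; exists i; split => //.
  by case: Wt => _ [_ [_ Hs]]; apply: Hs.
move/supp_nat: Hy => [l [_ El]]; subst y.
by exists l; apply/H2.
Qed.

End P5.

Section P6.
Variables (W : PO_dilator) (X : PO).
Hypothesis HN : normal W.
Local Notation raw := (raw W X).
Local Notation tsz := (@Defs.size W X).
Local Notation TWle := (@TWle W X).
Local Notation req := (@req W X).

Definition Tr B := forall s t u : raw, wf s -> wf t -> wf u -> tsz s < B -> tsz t < B -> tsz u < B ->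
  TWle s t -> TWle t u -> TWle s u.
Definition An B := forall s t : raw, wf s -> wf t -> tsz s < B -> tsz t < B ->
  TWle s t -> TWle t s -> req s t.

Lemma An_of_Tr B : Tr B -> An B.
Proof.
move=> TrB s t Ws Wt Bs Bt Hst Hts.
case: t Wt Bt Hst Hts => [y|m r' Hr' us tau] Wt Bt Hst Hts.
  case: s Ws Bs Hst Hts => [x|k r Hr ts sg] Ws Bs Hst Hts //=; exact: ple_anti.
case: s Ws Bs Hst Hts => [x|k r Hr ts sg] Ws Bs Hst Hts //.
have Hst0 := Hst.
move/TWle_node: Hst => [[j Hj]|U1].
  exfalso; apply: (nosub_child HN (i:=j) Wt); apply: TrB Hts Hj => //.
    exact: wf_child Wt.
  by have := sz_child us tau j; lia.
move/TWle_node: Hts => [[i Hi]|U2].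
  exfalso; apply: (nosub_child HN (i:=i) Ws); apply: TrB Hst0 Hi => //.
    exact: wf_child Ws.
  by have := sz_child ts sg i; lia.
move/union_leP: U1 => [n1 [R1 [HR1 [ia1 [ib1 [U1 [Ha1 [Hb1 L1]]]]]]]].
move/union_leP: U2 => [n2 [R2 [HR2 [ia2 [ib2 [U2 [Ha2 [Hb2 L2]]]]]]]].
have L2' := proj1 (transport tau sg U2 (yrep_sym (urep_yrep HR1 U1)) Ha2 Hb2 Hb1 Ha1) L2.
have E : Wmap Ha1 sg = Wmap Hb1 tau := ple_anti L1 L2'.
move: U1 => [C [Ia [Ib [Q [H1 [H2 [H3 H4]]]]]]].
move: Ws Wt => [Wts [Dts [Ers Sps]]] [Wus [Dus [Ert Spt]]].
have Ex1 : forall i, exists j, ib1 j = ia1 i.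
  move=> i; have : List.In (ia1 i) (supp (Wmap Hb1 tau)).
    by rewrite -E; apply/supp_nat; exists i; split => //; exact: Sps.
  by move/supp_nat => [j [_ Ej]]; exists j.
have Ex2 : forall j, exists i, ia1 i = ib1 j.
  move=> j; have : List.In (ib1 j) (supp (Wmap Ha1 sg)).
    by rewrite E; apply/supp_nat; exists j; split => //; exact: Spt.
  by move/supp_nat => [i [_ Ei]]; exists i.
pose pi i := proj1_sig (constructive_indefinite_description _ (Ex1 i)).
have piP : forall i, ib1 (pi i) = ia1 i.
  by move=> i; exact: (proj2_sig (constructive_indefinite_description _ (Ex1 i))).
pose pinv j := proj1_sig (constructive_indefinite_description _ (Ex2 j)).
have pinvP : forall j, ia1 (pinv j) = ib1 j.
  by move=> j; exact: (proj2_sig (constructive_indefinite_description _ (Ex2 j))).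
exists pi; split.
  exists pinv.
    by move=> i; apply: Ia; rewrite pinvP piP.
  by move=> j; apply: Ib; rewrite piP pinvP.
split; first by move=> i; apply/Q; rewrite piP.
have Epi : forall i i', r i i' <-> r' (pi i) (pi i').
  by move=> i i'; rewrite Ers -H1 -!piP H4 Ert.
split; first exact: Epi.
have Hpi : quasi_emb (X:=ordPO Hr) (Y:=ordPO Hr') pi by move=> a b /Epi.
exists Hpi.
have Eb1 : embedding (X:=ordPO Hr') (Y:=ordPO HR1) ib1.
  by move=> a b; split => [/H4/Ert|/Ert/H4].
apply: (Wmap_inj (Hf:=Hb1) Eb1).
by rewrite (Wmap_compE Hpi Hb1 Ha1 piP).
Qed.

Lemma Tr_step B : Tr B -> An B -> Tr B.+1.
Proof.
move=> TrB AnB.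
suff main : forall M s t u, tsz s + tsz t + tsz u < M -> wf s -> wf t -> wf u ->
    tsz s < B.+1 -> tsz t < B.+1 -> tsz u < B.+1 -> TWle s t -> TWle t u -> TWle s u.
  by move=> s t u *; apply: (main (tsz s + tsz t + tsz u).+1).
elim=> [|M IH] // s t u HM Ws Wt Wu Bs Bt Bu Hst Htu.
rewrite ltnS in HM.
case: u HM Wu Bu Htu => [z|p r'' Hr'' vs rho] HM Wu Bu Htu.
  case: t HM Wt Bt Hst Htu => [y|m r' Hr' us tau] HM Wt Bt Hst Htu //.
  case: s HM Ws Bs Hst => [x|k r Hr ts sg] HM Ws Bs Hst //.
  exact: ple_trans Hst Htu.
have Wv : forall l, wf (vs l) by move=> l; exact: wf_child Wu.
move/TWle_node: Htu => [[l Hl]|Htu].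
  apply: (TWle_child rho (j:=l)); apply: (IH s t (vs l)) => //.
    by have := sz_child vs rho l; lia.
  by have := sz_child vs rho l; lia.
case: t HM Wt Bt Hst Htu => [y|m r' Hr' us tau] HM Wt Bt Hst Htu //.
have Wus : forall j, wf (us j) by move=> j; exact: wf_child Wt.
move/TWle_node: Hst => [[j Hj]|Hst].
  have [l Hl] := union_child HN Wt Htu j.
  apply: (TWle_child rho (j:=l)); apply: (IH s (us j) (vs l)) => //.
  - by have := sz_child vs rho l; have := sz_child us tau j; lia.
  - by have := sz_child us tau j; lia.
  - by have := sz_child vs rho l; lia.
case: s HM Ws Bs Hst => [x|k r Hr ts sg] HM Ws Bs Hst //.
pose S := fun a : raw => wf a /\ tsz a < B.
have Sr : forall a, S a -> TWle a a by move=> a [Wa _]; exact: TWle_refl.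
have St : forall a b c, S a -> S b -> S c -> TWle a b -> TWle b c -> TWle a c.
  by move=> a b c [? ?] [? ?] [? ?]; apply: TrB.
have Sa : forall a b, S a -> S b -> TWle a b -> TWle b a -> req a b.
  by move=> a b [? ?] [? ?]; apply: AnB.
have S1 : forall i, S (ts i).
  by move=> i; split; [exact: wf_child Ws|have := sz_child ts sg i; lia].
have S2 : forall i, S (us i).
  by move=> i; split; [exact: wf_child Wt|have := sz_child us tau i; lia].
have S3 : forall i, S (vs i).
  by move=> i; split; [exact: wf_child Wu|have := sz_child vs rho i; lia].
have [n [R [HR [ja [jb [jc [Y1 [Y2 Y3]]]]]]]] := triple_make Sr St Sa S1 S2 S3.
have [_ [D1 [Ers _]]] := Ws.
have [_ [D2 [Ert _]]] := Wt.
have [_ [D3 [Eru _]]] := Wu.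
have Hja := yrep_qa (Hr:=Hr) Y1 Ers.
have Hjb := yrep_qb (Hr:=Hr') Y1 Ert.
have Hjc := yrep_qb (Hr:=Hr'') Y2 Eru.
move/union_leP: Hst => [n1 [R1 [HR1 [ia1 [ib1 [U1 [Ha1 [Hb1 L1]]]]]]]].
move/union_leP: Htu => [n2 [R2 [HR2 [ia2 [ib2 [U2 [Ha2 [Hb2 L2]]]]]]]].
have L1' := proj1 (transport sg tau U1 Y1 Ha1 Hb1 Hja Hjb) L1.
have L2' := proj1 (transport tau rho U2 Y2 Ha2 Hb2 Hjb Hjc) L2.
have L3 := ple_trans L1' L2'.
have [n3 [R3 [HR3 [ia3 [ib3 U3]]]]] := union_make Sr St Sa S1 S3 D1 D3.
apply: TWle_union; apply/union_leP; exists n3, R3, HR3, ia3, ib3; split => //.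
have Ha3 := yrep_qa (Hr:=Hr) (urep_yrep HR3 U3) Ers.
have Hb3 := yrep_qb (Hr:=Hr'') (urep_yrep HR3 U3) Eru.
exists Ha3, Hb3; apply/(transport sg rho U3 Y3 Ha3 Hb3 Hja Hjc); exact: L3.
Qed.

Lemma Tr_all B : Tr B.
Proof.
elim: B => [|B IH]; first by [].
exact: Tr_step IH (An_of_Tr IH).
Qed.

Lemma TWle_trans s t u : wf s -> wf t -> wf u -> TWle s t -> TWle t u -> TWle s u.
Proof.
move=> Ws Wt Wu; apply: (@Tr_all (tsz s + tsz t + tsz u).+1) => //; lia.
Qed.

Lemma TWle_anti s t : wf s -> wf t -> TWle s t -> TWle t s -> req s t.
Proof.
move=> Ws Wt Hst Hts; have := An_of_Tr (@Tr_all (tsz s + tsz t).+1) Ws Wt; apply => //; lia.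
Qed.

End P6.

Lemma nat_min (P : nat -> Prop) : (exists n, P n) -> exists n, P n /\ forall k, P k -> n <= k.
Proof.
move=> [n Pn]; apply: NNPP => H.
have H' : forall n k, k <= n -> ~ P k.
  elim=> [|n' IH] k Hk Pk.
    apply: H; exists k; split => // j _; by move: Hk; rewrite leqn0 => /eqP ->.
  case: (leqP k n') => [Hkn|Hkn]; first exact: IH Hkn Pk.
  apply: H; exists k; split => // j Pj; rewrite leqNgt; apply/negP => Hjk.
  by apply: (IH j) => //; lia.
exact: (H' n n (leqnn n) Pn).
Qed.

Lemma inf_sub (P : nat -> Prop) : (forall N, exists n, N <= n /\ P n) ->
  exists phi : nat -> nat, (forall i j, i < j -> phi i < phi j) /\ forall i, P (phi i).
Proof.
move=> H.
pose c N := proj1_sig (constructive_indefinite_description _ (H N)).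
have cP : forall N, N <= c N /\ P (c N).
  by move=> N; exact: (proj2_sig (constructive_indefinite_description _ (H N))).
pose phi := fix phi i := match i with 0 => c 0 | i'.+1 => c (phi i').+1 end.
exists phi; split; last by case=> [|i] /=; apply: (proj2 (cP _)).
move=> i j; elim: j => [|j IH] //.
rewrite ltnS leq_eqVlt => /orP [/eqP ->|Hij].
  by have := proj1 (cP (phi j).+1).
by have := proj1 (cP (phi j).+1); have := IH Hij; simpl; lia.
Qed.

Section P7.
Variables (W : PO_dilator) (X : PO).
Local Notation raw := (raw W X).
Local Notation tsz := (@Defs.size W X).
Local Notation TWle := (@TWle W X).
Local Notation req := (@req W X).

Definition bad (f : nat -> raw) := (forall i, wf (f i)) /\ (forall i j, i < j -> ~ TWle (f i) (f j)).
Definition agree (f g : nat -> raw) n := forall i, i < n -> f i = g i.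

Lemma step n F : bad F -> exists G, bad G /\ agree G F n /\
  forall H, bad H -> agree H F n -> tsz (G n) <= tsz (H n).
Proof.
move=> BF.
have [k [[G [BG [AG EG]]] Hk]] := @nat_min (fun k => exists G, bad G /\ agree G F n /\ tsz (G n) = k)
  (ex_intro _ (tsz (F n)) (ex_intro _ F (conj BF (conj (fun _ _ => erefl) erefl)))).
exists G; split => //; split => // H BH AH.
by rewrite EG; apply: Hk; exists H.
Qed.

Definition BadT := {f : nat -> raw | bad f}.

Definition nextbad (n : nat) (F : BadT) : BadT :=
  let G := constructive_indefinite_description _ (step n (proj2_sig F)) in
  exist _ (proj1_sig G) (proj1 (proj2_sig G)).

Lemma nextbadP n F : agree (proj1_sig (nextbad n F)) (proj1_sig F) n /\
  forall H, bad H -> agree H (proj1_sig F) n -> tsz (proj1_sig (nextbad n F) n) <= tsz (H n).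
Proof.
rewrite /nextbad /=.
by have [_ [? ?]] := proj2_sig (constructive_indefinite_description _ (step n (proj2_sig F))); split.
Qed.

Fixpoint Fs (F0 : BadT) (n : nat) : BadT :=
  match n with 0 => F0 | n'.+1 => nextbad n' (Fs F0 n') end.

Lemma minbad_ex F : bad F -> exists m, bad m /\
  forall n H, bad H -> agree H m n -> tsz (m n) <= tsz (H n).
Proof.
move=> BF.
pose F0 : BadT := exist _ F BF.
pose m i := proj1_sig (Fs F0 i.+1) i.
have Ag : forall j i, i < j -> proj1_sig (Fs F0 j) i = m i.
  elim=> [|j IH] i //.
  rewrite ltnS leq_eqVlt => /orP [/eqP ->|Hij] //.
  change (proj1_sig (nextbad j (Fs F0 j)) i = m i).
  by rewrite (proj1 (nextbadP j _) i Hij) IH.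
have Bm : bad m.
  split; first by move=> i; exact: (proj1 (proj2_sig (Fs F0 i.+1)) i).
  move=> i j Hij.
  rewrite -(Ag j.+1 i) ?(ltn_trans Hij) // -(Ag j.+1 j) //.
  exact: (proj2 (proj2_sig (Fs F0 j.+1)) i j Hij).
exists m; split => // n H BH AH.
apply: (proj2 (nextbadP n (Fs F0 n)) H BH).
by move=> i Hi; rewrite AH // Ag.
Qed.

End P7.

Section P8.
Variables (W : PO_dilator) (X : PO).
Hypotheses (HN : normal W) (HW : WPO_dilator W) (HX : wpo X).
Local Notation raw := (raw W X).
Local Notation tsz := (@Defs.size W X).
Local Notation TWle := (@TWle W X).
Local Notation req := (@req W X).

Variable m : nat -> raw.
Hypothesis Bm : bad m.
Hypothesis Mm : forall n H, bad H -> agree H m n -> tsz (m n) <= tsz (H n).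

Definition subat (t : raw) (l : nat) : option raw :=
  match t with
  | Leaf _ => None
  | Node k _ _ ts _ => match (insub l : option 'I_k) with Some j => Some (ts j) | None => None end
  end.

Definition Sub (p : nat * nat) t := subat (m p.1) p.2 = Some t.

Lemma Sub_fun p t u : Sub p t -> Sub p u -> t = u.
Proof. by rewrite /Sub => -> []. Qed.

Lemma Sub_inv p t : Sub p t -> exists k r Hr (ts : 'I_k -> raw) sg j,
  m p.1 = @Node W X k r Hr ts sg /\ t = ts j.
Proof.
rewrite /Sub; case: (m p.1) => [x|k r Hr ts sg] //=.
case: insubP => [j _ Ej|_] // [<-].
by exists k, r, Hr, ts, sg, j.
Qed.

Lemma Sub_node i k r Hr (ts : 'I_k -> raw) sg j :
  m i = @Node W X k r Hr ts sg -> Sub (i, val j) (ts j).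
Proof. by rewrite /Sub /= => ->; rewrite /= valK. Qed.

Lemma Sub_wf p t : Sub p t -> wf t.
Proof.
move=> /Sub_inv [k [r [Hr [ts [sg [j [E ->]]]]]]].
by have := proj1 Bm p.1; rewrite E; exact: wf_child.
Qed.

Lemma Sub_le p t : Sub p t -> TWle t (m p.1) /\ tsz t < tsz (m p.1).
Proof.
move=> /Sub_inv [k [r [Hr [ts [sg [j [E ->]]]]]]].
rewrite E; split; last exact: sz_child.
by apply: TWle_child_refl; rewrite -E; exact: (proj1 Bm).
Qed.

Definition lexle (p q : nat * nat) := p.1 < q.1 \/ (p.1 = q.1 /\ p.2 <= q.2).

Lemma lexle_anti p q : lexle p q -> lexle q p -> p = q.
Proof.
case: p q => [a b] [c d]; rewrite /lexle /= => H1 H2.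
have E1 : a = c by lia.
have E2 : b = d by lia.
by rewrite E1 E2.
Qed.

Definition canon p := exists t, Sub p t /\ forall p' t', Sub p' t' -> req t' t -> lexle p p'.
Definition Acar := {p : nat * nat | canon p}.
Definition Aple (a b : Acar) := exists t u, Sub (proj1_sig a) t /\ Sub (proj1_sig b) u /\ TWle t u.

Lemma Aple_iff a b t u : Sub (proj1_sig a) t -> Sub (proj1_sig b) u -> (Aple a b <-> TWle t u).
Proof.
move=> S1 S2; split; last by move=> H; exists t, u.
move=> [t' [u' [S1' [S2' H]]]].
by rewrite (Sub_fun S1 S1') (Sub_fun S2 S2').
Qed.

Lemma A_eq (a b : Acar) t u : Sub (proj1_sig a) t -> Sub (proj1_sig b) u -> req t u -> a = b.
Proof.
case: a => p Hp; case: b => q Hq /= Sa Sb Rtu.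
have [t0 [S0 H0]] := Hp; have [u0 [S1 H1]] := Hq.
rewrite -(Sub_fun S0 Sa) in Rtu; rewrite -(Sub_fun S1 Sb) in Rtu.
have E : p = q.
  apply: lexle_anti; [apply: (H0 q u0 S1); exact: req_sym|exact: (H1 p t0 S0)].
subst q; f_equal; apply: proof_irrelevance.
Qed.

Lemma Arefl (a : Acar) : Aple a a.
Proof.
case: a => p Hp; have [t [S _]] := Hp; exists t, t; do 2 (split => //).
exact: TWle_refl (Sub_wf S).
Qed.

Lemma Atrans (a b c : Acar) : Aple a b -> Aple b c -> Aple a c.
Proof.
move=> [t [u [S1 [S2 H1]]]] [u' [v [S2' [S3 H2]]]].
rewrite -(Sub_fun S2 S2') in H2.
exists t, v; do 2 (split => //).
exact (TWle_trans HN (Sub_wf S1) (Sub_wf S2) (Sub_wf S3) H1 H2).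
Qed.

Lemma Aanti (a b : Acar) : Aple a b -> Aple b a -> a = b.
Proof.
move=> [t [u [S1 [S2 H1]]]] [u' [t' [S2' [S1' H2]]]].
rewrite -(Sub_fun S2 S2') -(Sub_fun S1 S1') in H2.
apply: (A_eq S1 S2).
exact (TWle_anti HN (Sub_wf S1) (Sub_wf S2) H1 H2).
Qed.

Definition APO : PO := @mkPO Acar Aple Arefl Atrans Aanti.

Lemma canon_ex p t : Sub p t -> exists a : APO, exists t', Sub (proj1_sig a) t' /\ req t' t.
Proof.
move=> Spt.
have [a1 [[p1 [t1 [E1 [S1 R1]]]] M1]] :=
  @nat_min (fun k => exists p' t', p'.1 = k /\ Sub p' t' /\ req t' t)
  (ex_intro _ p.1 (ex_intro _ p (ex_intro _ t (conj erefl (conj Spt (req_refl t)))))).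
have S1' : Sub (a1, p1.2) t1 by rewrite /Sub /= -E1.
have [a2 [[t2 [S2 R2]] M2]] :=
  @nat_min (fun k => exists t', Sub (a1, k) t' /\ req t' t)
  (ex_intro _ p1.2 (ex_intro _ t1 (conj S1' R1))).
have Hc : canon (a1, a2).
  exists t2; split => // p' t' Sp' Rt'.
  have R' : req t' t := req_trans Rt' R2.
  have := M1 p'.1 (ex_intro _ p' (ex_intro _ t' (conj erefl (conj Sp' R')))).
  rewrite leq_eqVlt => /orP [/eqP E|L]; last by left.
  right; split => //=; apply: M2; exists t'; split => //.
  by rewrite /Sub /= E.
by exists (exist _ (a1, a2) Hc), t2.
Qed.

Lemma A_wpo : wpo APO.
Proof.
move=> g; apply: NNPP => Hng.
have Hb : forall i j, i < j -> ~ Aple (g i) (g j).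
  by move=> i j Hij H; apply: Hng; exists i, j.
have Ext : forall n, exists t, Sub (proj1_sig (g n)) t.
  by move=> n; case: (g n) => p Hp; have [t [S _]] := Hp; exists t.
pose tn n := proj1_sig (constructive_indefinite_description _ (Ext n)).
have tnS : forall n, Sub (proj1_sig (g n)) (tn n).
  by move=> n; exact: (proj2_sig (constructive_indefinite_description _ (Ext n))).
pose idx n := (proj1_sig (g n)).1.
have [i0 [[n0 En0] Mis]] := @nat_min (fun k => exists n, idx n = k)
  (ex_intro _ (idx 0) (ex_intro _ 0 erefl)).
have tle : forall n, TWle (tn n) (m (idx n)) /\ tsz (tn n) < tsz (m (idx n)).
  by move=> n; exact: Sub_le (tnS n).
pose h l := if l < i0 then m l else tn (n0 + (l - i0)).
have Bh : bad h.
  split.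
    by move=> l; rewrite /h; case: ifP => _; [exact: (proj1 Bm)|exact: Sub_wf (tnS _)].
  move=> l l' Hll'; rewrite /h; case: ifP => Hl; case: ifP => Hl'.
  - exact: (proj2 Bm).
  - move=> H.
    have Hn : i0 <= idx (n0 + (l' - i0)) by apply: Mis; eexists.
    apply: (proj2 Bm l (idx (n0 + (l' - i0)))); first by lia.
    exact (TWle_trans HN (proj1 Bm _) (Sub_wf (tnS _)) (proj1 Bm _) H (proj1 (tle _))).
  - by exfalso; lia.
  - move=> H; apply: (Hb (n0 + (l - i0)) (n0 + (l' - i0))); first by lia.
    by apply/(Aple_iff (tnS _) (tnS _)).
have Ah : agree h m i0 by move=> l Hl; rewrite /h Hl.
have := Mm Bh Ah; rewrite /h ltnn subnn addn0.
by have := proj2 (tle n0); rewrite /idx in En0 *; rewrite En0; lia.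
Qed.

Lemma io_ple (a b : APO) t u x y : Sub (proj1_sig a) t -> Sub (proj1_sig b) u ->
  req t x -> req u y -> (ple a b <-> TWle x y).
Proof. move=> S1 S2 R1 R2; rewrite -(TWle_reqE R1 R2); exact: Aple_iff S1 S2. Qed.

Lemma final : False.
Proof.
case: (classic (forall N, exists n, N <= n /\ exists x, m n = Leaf W x)) => [HL|HnL].
  have [phi [Iphi Pphi]] := inf_sub HL.
  pose x i := proj1_sig (constructive_indefinite_description _ (Pphi i)).
  have xP : forall i, m (phi i) = Leaf W (x i).
    by move=> i; exact: (proj2_sig (constructive_indefinite_description _ (Pphi i))).
  have [i [j [Hij Hle]]] := HX x.
  apply: (proj2 Bm (phi i) (phi j) (Iphi _ _ Hij)); rewrite !xP; exact: Hle.
have [N HN'] : exists N, forall n, N <= n ->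
    exists k r Hr (ts : 'I_k -> raw) sg, m n = @Node W X k r Hr ts sg.
  apply: NNPP => H; apply: HnL => N'; apply: NNPP => H2; apply: H; exists N' => n Hn.
  case E: (m n) => [x|k r Hr ts sg]; last by exists k, r, Hr, ts, sg.
  by exfalso; apply: H2; exists n; split => //; exists x.
have Ex : forall l, exists w : Wob W APO, exists k r (Hr : is_po r) (ts : 'I_k -> raw)
    (sg : Wob W (ordPO Hr)) (io : 'I_k -> APO) (Hio : quasi_emb (X:=ordPO Hr) (Y:=APO) io),
    m (N + l) = Node ts sg /\
    (forall j, exists t', Sub (proj1_sig (io j)) t' /\ req t' (ts j)) /\ w = Wmap Hio sg.
  move=> l; have [k [r [Hr [ts [sg E]]]]] := HN' (N + l) (leq_addr _ _).
  have Hc : forall j, exists a : APO, exists t', Sub (proj1_sig a) t' /\ req t' (ts j).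
    by move=> j; apply: canon_ex; exact: Sub_node E.
  pose io j := proj1_sig (constructive_indefinite_description _ (Hc j)).
  have ioP : forall j, exists t', Sub (proj1_sig (io j)) t' /\ req t' (ts j).
    by move=> j; exact: (proj2_sig (constructive_indefinite_description _ (Hc j))).
  have Wt : wf (m (N + l)) := proj1 Bm _.
  rewrite E in Wt; have [_ [_ [Er _]]] := Wt.
  have Hio : quasi_emb (X:=ordPO Hr) (Y:=APO) io.
    move=> j j' H; have [t1 [S1 R1]] := ioP j; have [t2 [S2 R2]] := ioP j'.
    by apply/Er; apply/(io_ple S1 S2 R1 R2).
  by exists (Wmap Hio sg), k, r, Hr, ts, sg, io, Hio.
pose w l := proj1_sig (constructive_indefinite_description _ (Ex l)).
have [l [l' [Hll' Hw]]] := HW A_wpo w.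
move: Hw; rewrite /w.
case: (constructive_indefinite_description _ (Ex l)) => w1 Hw1.
case: (constructive_indefinite_description _ (Ex l')) => w2 Hw2 /= Hle.
move: Hw1 => [k [r [Hr [ts [sg [io [Hio [E1 [Io1 Ew1]]]]]]]]].
move: Hw2 => [m2 [r' [Hr' [us [tau [io' [Hio' [E2 [Io2 Ew2]]]]]]]]].
rewrite Ew1 Ew2 in Hle.
apply: (proj2 Bm (N + l) (N + l')); first by lia.
have Ws : wf (m (N + l)) := proj1 Bm _.
have Wt : wf (m (N + l')) := proj1 Bm _.
rewrite E1 E2; rewrite E1 in Ws; rewrite E2 in Wt.
have [_ [D1 [Ers _]]] := Ws.
have [_ [D2 [Ert _]]] := Wt.
have Sr : forall a, wf a -> TWle a a by move=> a; exact: TWle_refl.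
have St : forall a b c, wf a -> wf b -> wf c -> TWle a b -> TWle b c -> TWle a c.
  by move=> a b c Wa Wb Wc H1 H2; exact (TWle_trans HN Wa Wb Wc H1 H2).
have Sa : forall a b, wf a -> wf b -> TWle a b -> TWle b a -> req a b.
  by move=> a b Wa Wb H1 H2; exact (TWle_anti HN Wa Wb H1 H2).
have [n [R [HR [ia [ib U]]]]] :=
  union_make Sr St Sa (fun i => wf_child i Ws) (fun j => wf_child j Wt) D1 D2.
have Y : yrep ts us io io'.
  split.
    move=> i j Rij; have [t1 [S1 R1]] := Io1 i; have [t2 [S2 R2]] := Io2 j.
    apply: (A_eq S1 S2); exact: req_trans R1 (req_trans Rij (req_sym R2)).
  split; first by move=> i j; have [t1 [S1 R1]] := Io1 i; have [t2 [S2 R2]] := Io1 j;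
    exact: io_ple S1 S2 R1 R2.
  split; first by move=> i j; have [t1 [S1 R1]] := Io1 i; have [t2 [S2 R2]] := Io2 j;
    exact: io_ple S1 S2 R1 R2.
  split; first by move=> i j; have [t1 [S1 R1]] := Io1 i; have [t2 [S2 R2]] := Io2 j;
    exact: io_ple S2 S1 R2 R1.
  by move=> i j; have [t1 [S1 R1]] := Io2 i; have [t2 [S2 R2]] := Io2 j;
    exact: io_ple S1 S2 R1 R2.
have Ha := yrep_qa (Hr:=Hr) (urep_yrep HR U) Ers.
have Hb := yrep_qb (Hr:=Hr') (urep_yrep HR U) Ert.
apply: TWle_union; apply/union_leP; exists n, R, HR, ia, ib; split => //.
exists Ha, Hb; apply/(transport sg tau U Y Ha Hb Hio Hio'); exact: Hle.
Qed.

End P8.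

Theorem proposition2p7 (W : PO_dilator) (HN : normal W) (HW : WPO_dilator W)
  (X : PO) (HX : wpo X) : TW_is_wpo W X.
Proof.
split; first by move=> s; exact: TWle_refl.
split; first by move=> s t u Ws Wt Wu H1 H2; exact (TWle_trans HN Ws Wt Wu H1 H2).
split; first by move=> s t Ws Wt H1 H2; exact (TWle_anti HN Ws Wt H1 H2).
move=> f Wf; apply: NNPP => H.
have Bf : bad f.
  by split => // i j Hij Hle; apply: H; exists i, j.
have [m [Bm Mm]] := minbad_ex Bf.
exact: (final HN HW HX Bm Mm).
Qed.
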